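(* Let $k$ be a difference field of characteristic $0$ and $R=k\{y_1,\ldots,y_n\}$. Any strictly ascending chain of radical well-mixed monomial $\sigma$-ideals in $R$ is finite.
   Context: A difference field is a field $k$ with a ring endomorphism $\sigma$. $R=k\{y_1,\ldots,y_n\}$ is the polynomial ring over $k$ in the variables $\sigma^j(y_i)$ ($1\le i\le n$, $j\ge0$), with $\sigma$ extended naturally. For $p=\sum_i c_ix^i\in\mathbb{N}[x]$ and $a\in R$, $a^p=\prod_i(\sigma^i(a))^{c_i}$; a monomial is $\mathbf{y}^{\mathbf{u}}=y_1^{u_1}\cdots y_n^{u_n}$ with $\mathbf{u}\in\mathbb{N}[x]^n$. A $\sigma$-ideal is an ideal stable under $\sigma$; a monomial $\sigma$-ideal is a $\sigma$-ideal generated (as an ideal/$\sigma$-ideal) by monomials. A $\sigma$-ideal $I$ is well-mixed if $ab\in I$ implies $a\sigma(b)\in I$; radical means radical as an ideal. *)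

(* Defs.v *)
From HB Require Import structures.
From mathcomp Require Import all_boot all_order all_algebra.
From mathcomp Require Import finmap.
From mathcomp.multinomials Require Import monalg.
Set Implicit Arguments. Unset Strict Implicit. Unset Printing Implicit Defensive.
Import GRing.Theory.
Local Open Scope ring_scope.

(* The variables sigma^j(y_i), indexed by (i, j) with i < n, j : nat. *)
Definition dvar (n : nat) := ('I_n * nat)%type.

Definition dmonom (n : nat) := {cmonom (dvar n)}.

(* R = k{y_1,...,y_n} : the polynomial ring over k in the variables
   sigma^j(y_i) (monoid algebra of the free commutative monoid on them). *)
Definition dpoly (k : fieldType) (n : nat) := {malg k[dmonom n]}.

Definition dY (k : fieldType) (n : nat) (v : dvar n) : dpoly k n :=
  << ucm v >>.

(* The extension of sigma to R: coefficients are mapped by sigma and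
   sigma^j(y_i) is mapped to sigma^(j+1)(y_i). *)
Definition dsigma (k : fieldType) (n : nat) (s : {rmorphism k -> k})
    (f : dpoly k n) : dpoly k n :=
  mmap (fun c : k => (s c)%:MP : dpoly k n)
       (fun m : dmonom n =>
          \prod_(v <- finsupp m) dY k (v.1, v.2.+1) ^+ m v) f.

Section Ideals.
Variable (R : comRingType) (s : R -> R).

Definition is_ideal (I : R -> Prop) : Prop :=
  [/\ I 0,
      (forall a b, I a -> I b -> I (a + b)) &
      (forall r a, I a -> I (r * a))].

Definition ideal_gen (S : R -> Prop) : R -> Prop :=
  fun x => forall J, is_ideal J -> (forall a, S a -> J a) -> J x.

Definition is_sigma_ideal (I : R -> Prop) : Prop :=
  is_ideal I /\ (forall a, I a -> I (s a)).

Definition well_mixed (I : R -> Prop) : Prop :=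
  forall a b, I (a * b) -> I (a * s b).

Definition radical (I : R -> Prop) : Prop :=
  forall a (m : nat), I (a ^+ m) -> I a.
End Ideals.

Definition is_dmonomial (k : fieldType) (n : nat) (f : dpoly k n) : Prop :=
  exists u : dmonom n, f = << u >>.

Definition monomial_sigma_ideal (k : fieldType) (n : nat)
    (s : {rmorphism k -> k}) (I : dpoly k n -> Prop) : Prop :=
  is_sigma_ideal (dsigma s) I /\
  exists S : dpoly k n -> Prop,
    (forall f, S f -> is_dmonomial f) /\ (forall f, I f <-> ideal_gen S f).

(* Main.v *)
Require Import Defs.
From HB Require Import structures.
From mathcomp Require Import all_boot all_order all_algebra.
From mathcomp Require Import finmap.
From mathcomp.multinomials Require Import monalg.
From Stdlib Require Import Classical ClassicalEpsilon.
Set Implicit Arguments. Unset Strict Implicit. Unset Printing Implicit Defensive.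
Import GRing.Theory.

Lemma min_after (g : nat -> nat) x :
  exists i, x < i /\ forall j, x < j -> g i <= g j.
Proof.
have H : forall v i, x < i -> g i <= v ->
    exists i, x < i /\ forall j, x < j -> g i <= g j.
  elim=> [|v IH] i xi gi.
    by exists i; split=> // j _; move: gi; rewrite leqn0 => /eqP ->.
  case: (classic (exists j, x < j /\ g j <= v)) => [[j [xj gj]]|nj].
    exact: (IH j).
  exists i; split=> // j xj; apply: (leq_trans gi); rewrite ltnNge; apply/negP.
  by move=> gj; apply: nj; exists j.
exact: (H (g x.+1) x.+1).
Qed.

Lemma mono_sub (g : nat -> nat) : exists phi : nat -> nat,
  (forall a, phi a < phi a.+1) /\ (forall a, g (phi a) <= g (phi a.+1)).
Proof.
pose nxt x := proj1_sig (constructive_indefinite_description _ (min_after g x)).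
have Hn x : x < nxt x /\ forall j, x < j -> g (nxt x) <= g j.
  by rewrite /nxt; case: constructive_indefinite_description.
exists (fun a => iter a.+1 nxt 0); split=> a.
  by rewrite [X in _ < X]/= ; case: (Hn (iter a.+1 nxt 0)).
rewrite [X in _ <= g X]/= [X in g X <= _]/=.
case: (Hn (iter a nxt 0)) => h1 h2; apply: h2.
by apply: (leq_trans h1); case: (Hn (nxt (iter a nxt 0))) => /ltnW.
Qed.

Lemma dickson k (f : nat -> nat -> nat) : exists phi : nat -> nat,
  (forall a, phi a < phi a.+1) /\
  (forall a i, i < k -> f (phi a) i <= f (phi a.+1) i).
Proof.
elim: k => [|k [phi [Hphi Hf]]]; first by exists id.
have [psi [Hpsi Hg]] := mono_sub (fun a => f (phi a) k).
have phimono : {homo phi : x y / x < y >-> x < y}.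
  by apply: homo_ltn => //; exact: ltn_trans.
exists (fun a => phi (psi a)); split=> [a|a i]; first exact: phimono.
rewrite ltnS leq_eqVlt => /orP[/eqP ->|ik]; first exact: Hg.
have hm : forall x y, x <= y -> f (phi x) i <= f (phi y) i.
  move=> x y xy.
  exact: (@homo_leq _ (fun z => f (phi z) i) (fun a b => a <= b) (@leqnn)
    (fun y x z => @leq_trans y x z) (fun z => Hf z i ik) x y xy).
by apply: hm; apply: ltnW.
Qed.

Local Open Scope ring_scope.

Section Alg.
Variables (k : fieldType) (n : nat) (s : {rmorphism k -> k}).
Local Notation P := (dpoly k n).
Local Notation M := (dmonom n).

Lemma malgMU (u v : M) : << mmul u v >> = <<u>> * <<v>> :> P.
Proof. by rewrite malgM_def fgmulUU mulr1. Qed.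

Lemma dsigmaY (e : dvar n) : dsigma s (dY k e) = dY k (e.1, e.2.+1).
Proof.
rewrite /dsigma /dY mmapE msuppU1 big_seq_fset1 mcoeffUU.
rewrite rmorph1.
rewrite mpolyC1E mul1r.
rewrite mdomU big_seq_fset1 cmUU expr1.
by []. Qed.
Lemma scaleU (c : k) (u : M) : << c *g u >> = c%:MP * <<u>> :> P.
Proof. by rewrite malgM_def fgmulUU mulr1 mul1m. Qed.
Variable I : P -> Prop.
Hypothesis Iid : is_ideal I.

Lemma I0 : I 0. Proof. by case: Iid. Qed.
Lemma ID a b : I a -> I b -> I (a + b). Proof. by case: Iid => _ H _; apply: H. Qed.
Lemma IM r a : I a -> I (r * a). Proof. by case: Iid => _ _ H; apply: H. Qed.

Lemma I_of_monos f : (forall u, u \in msupp f -> I <<u>>) -> I f.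
Proof.
move=> H; rewrite (monalgE f) big_seq.
elim/big_rec: _ => [|u g uf Ig]; first exact: I0.
by apply: ID => //; rewrite scaleU; apply: IM; apply: H.
Qed.
Hypothesis Imono : exists S : P -> Prop,
    (forall f, S f -> is_dmonomial f) /\ (forall f, I f <-> ideal_gen S f).

Lemma monos_of_I f : I f -> forall u, u \in msupp f -> I <<u>>.
Proof.
case: Imono => S [HS HI] If.
apply: ((HI f).1 If (fun g => forall u, u \in msupp g -> I <<u>>)).
  split.
  - move=> u. rewrite (msupp0 (K:=M) (G:=k)). by [].
  - move=> a b Ha Hb u /(fsubsetP (msuppD_le a b)).
    rewrite in_fsetU; case/orP; [exact: Ha | exact: Hb].
  - move=> r a Ha u /msuppM_le [x [y [_ ya ->]]].
    rewrite (malgMU x y). apply: IM; exact: Ha.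
move=> g Sg; have [w gw] := HS _ Sg; move=> u.
rewrite gw.
move=> hu; have : w == u.
  move: hu; rewrite -(mcoeff_neq0 (<<w>> : P) u) (mcoeffU w (1:k) u).
  by case: (w == u) => //; rewrite mulr0n eqxx.
move=> /eqP <-; rewrite -gw; apply/HI => J _ HJ; exact: HJ _ Sg.
Qed.

Hypothesis Iwm : well_mixed (dsigma s) I.

Lemma lift1 (m : M) (i : 'I_n) j t :
  I <<mmul m (ucm (i,j))>> -> I <<mmul m (ucm (i, (j + t)%N))>>.
Proof.
move=> H; elim: t => [|t IH]; first by rewrite addn0.
move: IH; rewrite (malgMU m) (malgMU m) => /Iwm.
by rewrite -/(dY k (i, j + t)) dsigmaY /= addnS.
Qed.

Lemma cm_eq (m1 m2 : M) : (forall i, m1 i = m2 i) -> m1 = m2.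
Proof. by move=> h; apply/eqP/cmP. Qed.

Lemma move_up (lam : 'I_n -> nat) d : forall u v : M, (mdeg u <= d)%N ->
  (forall e, e \in finsupp u -> (e.2 <= lam e.1)%N) -> I <<mmul v u>> ->
  exists w : M, I <<mmul v w>> /\ forall e, e \in finsupp w ->
    e.2 = lam e.1 /\ exists e', e' \in finsupp u /\ e'.1 = e.1.
Proof.
elim: d => [|d IH] u v du cu Iu.
  have u1 : u = mone by apply: mdeg_eq0I; move: du; rewrite leqn0 => /eqP.
  by exists u; split => // e; rewrite u1 mdom1 inE.
case: (fset_0Vmem (finsupp u)) => [u0|[e eu]].
  have u1 : u = mone.
    by apply: cm_eq => i; rewrite cm1; apply/eqP; rewrite cmE_eq0 u0 inE.
  by exists u; split => // e0; rewrite u1 mdom1 inE.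
pose u' := divcm u (ucm e).
have ue : u = mmul u' (ucm e).
  apply: cm_eq => i; rewrite cmM divcmE cmU.
  case: eqP => [<-|_]; last by rewrite subn0 addn0.
  by rewrite subnK // lt0n cmE_neq0.
have du' : (mdeg u' <= d)%N.
  by move: du; rewrite ue mdegM mdegU addn1 ltnS.
have su' : forall x, x \in finsupp u' -> x \in finsupp u.
  move=> x; rewrite -!cmE_neq0 divcmE; apply: contra => /eqP ->; by [].
have le := cu e eu.
have H1 : I <<mmul (mmul v u') (ucm (e.1, e.2))>>.
  move: Iu; rewrite ue -surjective_pairing.
  by have -> : mmul v (mmul u' (ucm e)) = mmul (mmul v u') (ucm e)
    by apply: cm_eq => i; rewrite !cmM addnA.
have := lift1 (lam e.1 - e.2) H1; rewrite subnKC //.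
have -> : mmul (mmul v u') (ucm (e.1, lam e.1)) =
          mmul (mmul v (ucm (e.1, lam e.1))) u'.
  by apply: cm_eq => i; rewrite !cmM -!addnA (addnC (u' i)).
move=> H2.
have [w' [Iw' Pw']] := IH u' _ du' (fun x hx => cu x (su' x hx)) H2.
exists (mmul (ucm (e.1, lam e.1)) w'); split.
  by have <- : mmul (mmul v (ucm (e.1, lam e.1))) w' =
      mmul v (mmul (ucm (e.1, lam e.1)) w')
    by apply: cm_eq => i; rewrite !cmM addnA.
move=> x; rewrite mdomD mdomU in_fsetU in_fset1 => /orP[/eqP ->|xw].
  by split => //; exists e.
have [h1 [e' [e'u e'x]]] := Pw' x xw.
by split => //; exists e'; split => //; apply: su'.
Qed.
End Alg.

Lemma bigmax_seq_arg (T : eqType) (r : seq T) (Pr : pred T) (F : T -> nat) :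
  (0 < \max_(x <- r | Pr x) F x)%N ->
  exists x, x \in r /\ Pr x /\ F x = \max_(x <- r | Pr x) F x.
Proof.
elim: r => [|a r IH]; first by rewrite big_nil.
rewrite big_cons; case Pa: (Pr a) => H.
  case: (leqP (\max_(x <- r | Pr x) F x) (F a)) => h.
    by exists a; rewrite inE eqxx Pa; split => //; split => //; rewrite (maxn_idPl h).
  have [x [xr [Px Fx]]] := IH (leq_ltn_trans (leq0n _) h).
  by exists x; rewrite inE xr orbT; split => //; split => //; rewrite (maxn_idPr (ltnW h)).
have [x [xr [Px Fx]]] := IH H.
by exists x; rewrite inE xr orbT.
Qed.

Definition cvec (n : nat) (u : dmonom n) (i : nat) : nat :=
  (\max_(e <- finsupp u | (nat_of_ord e.1 == i)) e.2.+1)%N.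

Lemma cvec_gt n (u : dmonom n) e : e \in finsupp u -> (e.2 < cvec u e.1)%N.
Proof. by move=> h; apply: (@leq_bigmax_seq _ _ _ (fun e => e.2.+1) e h). Qed.

Lemma cvec_arg n (u : dmonom n) i : (0 < cvec u i)%N ->
  exists e, e \in finsupp u /\ nat_of_ord e.1 = i /\ e.2.+1 = cvec u i.
Proof.
move=> /bigmax_seq_arg [x [xr [/eqP Px Fx]]]; by exists x.
Qed.

Lemma cm_le_mdeg I (w : {cmonom I}) i : (w i <= mdeg w)%N.
Proof.
case: (boolP (i \in finsupp w)) => hi.
  by rewrite mdegE (big_rem i hi) /= leq_addr.
by move: hi; rewrite -cmE_eq0 => /eqP ->.
Qed.



Theorem corollary5p7 (k : fieldType) (s : {rmorphism k -> k})
  (hchar : [pchar k]%R =i pred0) (n : nat) :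
  ~ exists I : nat -> (dpoly k n -> Prop),
      forall m : nat,
        [/\ monomial_sigma_ideal s (I m),
            radical (I m), well_mixed (dsigma s) (I m),
            (forall f, I m f -> I m.+1 f) &
            exists f, I m.+1 f /\ ~ I m f].
Proof.
move=> [I HI].
have Iid m : is_ideal (I m) by case: (HI m) => [[[]]].
have Imono m : exists S : dpoly k n -> Prop, (forall f, S f -> is_dmonomial f) /\ (forall f, I m f <-> ideal_gen S f).
  by case: (HI m) => [[_ H] _ _ _ _].
have mono : forall a t f, I a f -> I (a + t)%N f.
  move=> a; elim=> [|t IH] f h; first by rewrite addn0.
  by rewrite addnS; case: (HI (a + t)%N) => _ _ _ H _; apply/H/IH.
have ex m : exists u : dmonom n, I m.+1 <<u>> /\ ~ I m <<u>>.
  case: (HI m) => _ _ _ _ [f [f1 f0]].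
  apply: NNPP => H; apply: f0; apply: (I_of_monos (Iid m)) => u hu.
  apply: NNPP => nu; apply: H; exists u; split => //.
  exact: (monos_of_I (Iid m.+1) (Imono m.+1) f1 hu).
pose U m := proj1_sig (constructive_indefinite_description _ (ex m)).
have HU m : I m.+1 <<U m>> /\ ~ I m <<U m>>.
  by rewrite /U; case: constructive_indefinite_description.
have [phi [Hphi Hf]] := dickson n (fun a i => cvec (U a) i).
set a := phi 0; set b := phi 1.
have ab : (a < b)%N := Hphi 0.
pose lam (i : 'I_n) := (cvec (U b) i).-1.
have cond : forall e, e \in finsupp (U a) -> (e.2 <= lam e.1)%N.
  move=> e he; have h1 := cvec_gt he.
  have h2 := Hf 0 e.1 (ltn_ord e.1).
  rewrite /lam; have := leq_trans h1 h2; rewrite -/a -/b.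
  by case: (cvec (U b) e.1).
have Ia : I a.+1 <<mmul mone (U a)>> by rewrite mul1m; case: (HU a).
case: (HI a.+1) => _ rad wm _ _.
have [w [Iw Pw]] := move_up wm (leqnn (mdeg (U a))) cond Ia.
rewrite mul1m in Iw.
have wsub : forall x, x \in finsupp w -> x \in finsupp (U b).
  move=> x xw; have [x2 [e' [e'u e'x]]] := Pw x xw.
  have h1 := cvec_gt e'u; rewrite e'x in h1.
  have h2 := Hf 0 x.1 (ltn_ord x.1); rewrite -/a -/b in h2.
  have [e'' [e''u [e''1 e''2]]] := cvec_arg (leq_trans (leq_trans (ltn0Sn _) h1) h2).
  have -> : x = e''.
    move: x2 e''1 e''2; case: x {xw e'x h1 h2} => x1 x2 /=.
    case: e'' {e''u} => y1 y2 /= hx hy1 hy2.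
    have e1 : y1 = x1 by apply: ord_inj.
    by subst y1; rewrite hx /lam -hy2.
  exact: e''u.
pose D := mdeg w.
pose y t := iter t (mmul (U b)) mone.
have ypow t : <<y t>> = <<U b>> ^+ t :> dpoly k n.
  elim: t => [|t IH]; first by rewrite expr0 /y /= mpolyC1E.
  by rewrite exprS /y /= malgMU -/(y t) IH.
have yval t i : y t i = (t * U b i)%N.
  elim: t => [|t IH]; first by rewrite /y /= cm1.
  by rewrite /y /= cmM -/(y t) IH mulSn.
have wr : mmul w (divcm (y D) w) = y D.
  apply: cm_eq => i; rewrite cmM divcmE subnKC // yval.
  case: (boolP (i \in finsupp w)) => hi; last first.
    by move: hi; rewrite -cmE_eq0 => /eqP ->.
  apply: (leq_trans (cm_le_mdeg w i)); rewrite -/D leq_pmulr //.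
  by rewrite lt0n cmE_neq0; apply: wsub.
have Ipow : I a.+1 (<<U b>> ^+ D).
  by rewrite -ypow -wr malgMU mulrC; apply: (IM (Iid a.+1)).
have Ib : I a.+1 <<U b>> := rad _ _ Ipow.
have := mono a.+1 (b - a.+1)%N _ Ib; rewrite subnKC // => Ib'.
by case: (HU b) => _; apply.
Qed.
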